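(* Let $\Bbbk$ be an algebraically closed field of characteristic zero and $H$ the $\Bbbk$-algebra generated by $b,c,z$ with relations $b^2=c^2=1$, $bc=cb$, $zb=-bz$, $zc=-cz$, $z^2=0$. Let $e_0=\frac14(1+b)(1+c)$, $e_1=\frac14(1+b)(1-c)$, $e_2=\frac14(1-b)(1+c)$, $e_3=\frac14(1-b)(1-c)$. Then the two-sided ideals of $H$ are exactly the following $49$ pairwise distinct ideals: $(0)$, $(1)$, $(e_0)$, $(e_1)$, $(e_2)$, $(e_3)$, $(e_0+e_1)$, $(e_0+e_2)$, $(e_0+e_3)$, $(e_1+e_2)$, $(e_1+e_3)$, $(e_2+e_3)$, $(e_0+e_1+e_2)$, $(e_0+e_1+e_3)$, $(e_0+e_2+e_3)$, $(e_1+e_2+e_3)$, $(z)$, $(ze_0)$, $(ze_1)$, $(ze_2)$, $(ze_3)$, $(z(e_0+e_1))$, $(z(e_0+e_2))$, $(z(e_0+e_3))$, $(z(e_1+e_2))$, $(z(e_1+e_3))$, $(z(e_2+e_3))$, $(z(e_0+e_1+e_2))$, $(z(e_0+e_1+e_3))$, $(z(e_0+e_2+e_3))$, $(z(e_1+e_2+e_3))$, $(z+e_0)$, $(ze_1+e_0)$, $(ze_2+e_0)$, $(z+e_1)$, $(ze_0+e_1)$, $(ze_3+e_1)$, $(z+e_2)$, $(ze_0+e_2)$, $(ze_3+e_2)$, $(z+e_3)$, $(ze_1+e_3)$, $(ze_2+e_3)$, $(z+e_0+e_3)$, $(ze_1+e_0+e_3)$, $(ze_2+e_0+e_3)$, $(z+e_1+e_2)$,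 $(ze_0+e_1+e_2)$, $(ze_3+e_1+e_2)$.
   Context: $(a)$ denotes the two-sided ideal of $H$ generated by $a$. *)

(* Defs.v *)
From HB Require Import structures.
From mathcomp Require Import all_boot all_order all_algebra.
Set Implicit Arguments. Unset Strict Implicit. Unset Printing Implicit Defensive.
Import Order.TTheory GRing.Theory Num.Theory.
Local Open Scope ring_scope.

(* H has k-basis b^i c^j z^l (i,j,l in {0,1}); we realise H through its
   (faithful) left regular representation on k^8.  The basis vector with
   index n < 8 is b^(bit0 n) c^(bit1 n) z^(bit2 n). *)

Definition bitb (n : nat) : bool := odd n.
Definition bitc (n : nat) : bool := odd n./2.
Definition bitz (n : nat) : bool := odd n./2./2.

Section H.
Variable k : fieldType.

Definition Hb : 'M[k]_8 := \matrix_(r, s)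
  ((bitb r != bitb s) && (bitc r == bitc s) && (bitz r == bitz s))%:R.
Definition Hc : 'M[k]_8 := \matrix_(r, s)
  ((bitb r == bitb s) && (bitc r != bitc s) && (bitz r == bitz s))%:R.
(* left multiplication by z : b^i c^j |-> (-1)^(i+j) b^i c^j z,  b^i c^j z |-> 0 *)
Definition Hz : 'M[k]_8 := \matrix_(r, s)
  (if [&& ~~ bitz s, bitz r, bitb r == bitb s & bitc r == bitc s]
   then (-1) ^+ (bitb s + bitc s) else 0).

Definition Hmono (n : 'I_8) : 'M[k]_8 :=
  Hb ^+ bitb n * Hc ^+ bitc n * Hz ^+ bitz n.

Definition inH (x : 'M[k]_8) : Prop :=
  exists l : 'I_8 -> k, x = \sum_(n < 8) l n *: Hmono n.

Definition is_ideal (I : 'M[k]_8 -> Prop) : Prop :=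
  [/\ forall x, I x -> inH x,
      I 0,
      forall x y, I x -> I y -> I (x + y)
    & forall h x, inH h -> I x -> I (h * x) /\ I (x * h)].

Definition gen_ideal (a : 'M[k]_8) : 'M[k]_8 -> Prop :=
  fun x => forall I, is_ideal I -> I a -> I x.

Definition same_ideal (I J : 'M[k]_8 -> Prop) : Prop := forall x, I x <-> J x.

Definition e0 : 'M[k]_8 := (4%:R)^-1 *: ((1 + Hb) * (1 + Hc)).
Definition e1 : 'M[k]_8 := (4%:R)^-1 *: ((1 + Hb) * (1 - Hc)).
Definition e2 : 'M[k]_8 := (4%:R)^-1 *: ((1 - Hb) * (1 + Hc)).
Definition e3 : 'M[k]_8 := (4%:R)^-1 *: ((1 - Hb) * (1 - Hc)).

Definition gens49 : seq 'M[k]_8 :=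
  [:: 0; 1; e0; e1; e2; e3; e0 + e1; e0 + e2; e0 + e3; e1 + e2; e1 + e3;
      e2 + e3; e0 + e1 + e2; e0 + e1 + e3; e0 + e2 + e3; e1 + e2 + e3;
      Hz; Hz * e0; Hz * e1; Hz * e2; Hz * e3; Hz * (e0 + e1); Hz * (e0 + e2);
      Hz * (e0 + e3); Hz * (e1 + e2); Hz * (e1 + e3); Hz * (e2 + e3);
      Hz * (e0 + e1 + e2); Hz * (e0 + e1 + e3); Hz * (e0 + e2 + e3);
      Hz * (e1 + e2 + e3);
      Hz + e0; Hz * e1 + e0; Hz * e2 + e0;
      Hz + e1; Hz * e0 + e1; Hz * e3 + e1;
      Hz + e2; Hz * e0 + e2; Hz * e3 + e2;
      Hz + e3; Hz * e1 + e3; Hz * e2 + e3;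
      Hz + e0 + e3; Hz * e1 + e0 + e3; Hz * e2 + e0 + e3;
      Hz + e1 + e2; Hz * e0 + e1 + e2; Hz * e3 + e1 + e2].

End H.

(* Main.v *)
Require Import Defs.
From mathcomp Require Import all_boot all_order all_algebra.
Import GRing.Theory.
Local Open Scope ring_scope.

Definition sum8 (F : nat -> int) : int := foldr (fun t a => F t + a) 0 (iota 0 8).
Definition fb (r s : nat) : int :=
  Posz ((bitb r != bitb s) && (bitc r == bitc s) && (bitz r == bitz s)).
Definition fc (r s : nat) : int :=
  Posz ((bitb r == bitb s) && (bitc r != bitc s) && (bitz r == bitz s)).
Definition fz (r s : nat) : int :=
  if [&& ~~ bitz s, bitz r, bitb r == bitb s & bitc r == bitc s]
  then (-1) ^+ (bitb s + bitc s) else 0.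
Definition fid (r s : nat) : int := Posz (r == s).
Definition fmul (f g : nat -> nat -> int) i j := sum8 (fun t => f i t * g t j).
Definition fadd (f g : nat -> nat -> int) i j := f i j + g i j.
Definition fopp (f : nat -> nat -> int) i j := - f i j.
Definition fscal (c : int) (f : nat -> nat -> int) i j := c * f i j.
Definition feq (f g : nat -> nat -> int) :=
  all (fun i => all (fun j => f i j == g i j) (iota 0 8)) (iota 0 8).

Section IMs.
Variable k : fieldType.
Local Notation Hb := (Hb k). Local Notation Hc := (Hc k). Local Notation Hz := (Hz k).

Definition IM (f : nat -> nat -> int) : 'M[k]_8 := \matrix_(i, j) (f i j)%:~R.

Lemma sum8E F : sum8 F = \sum_(t < 8) F t.
Proof. by rewrite !big_ord_recl big_ord0 /sum8 /=. Qed.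

Lemma IM_mul f g : IM f * IM g = IM (fmul f g).
Proof.
apply/matrixP => i j; rewrite !mxE /fmul sum8E rmorph_sum.
by apply: eq_bigr => t _; rewrite !mxE rmorphM.
Qed.

Lemma IM_add f g : IM f + IM g = IM (fadd f g).
Proof. by apply/matrixP => i j; rewrite !mxE rmorphD. Qed.

Lemma IM_opp f : - IM f = IM (fopp f).
Proof. by apply/matrixP => i j; rewrite !mxE rmorphN. Qed.

Lemma IM_scal c f : c%:~R *: IM f = IM (fscal c f).
Proof. by apply/matrixP => i j; rewrite !mxE rmorphM. Qed.

Lemma IM0 : 0 = IM (fun _ _ => 0).
Proof. by apply/matrixP => i j; rewrite !mxE. Qed.

Lemma IM1 : 1 = IM fid.
Proof. by apply/matrixP => i j; rewrite !mxE pmulrn. Qed.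

Lemma IM_eq f g : feq f g -> IM f = IM g.
Proof.
move=> /allP H; apply/matrixP => i j; rewrite !mxE.
have /H /allP /(_ j) : (i : nat) \in iota 0 8 by rewrite mem_iota ltn_ord.
by rewrite mem_iota /= ltn_ord => /(_ isT) /eqP ->.
Qed.

Lemma HbE : Hb = IM fb. Proof. by apply/matrixP => i j; rewrite !mxE pmulrn. Qed.
Lemma HcE : Hc = IM fc. Proof. by apply/matrixP => i j; rewrite !mxE pmulrn. Qed.
Lemma HzE : Hz = IM fz.
Proof.
apply/matrixP => i j; rewrite !mxE /fz; case: ifP => _; last by [].
by rewrite rmorphXn rmorphN1.
Qed.

End IMs.
Ltac imcheck := rewrite ?HbE ?HcE ?HzE ?IM1 ?mulrS ?mulr0n ?IM0; repeat (first [rewrite IM_mul | rewrite IM_add | rewrite IM_opp]); apply: IM_eq; vm_compute; reflexivity.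



From mathcomp Require Import zify.
From Stdlib Require Import ClassicalEpsilon.
Local Open Scope nat_scope.

Definition sb (n : nat) := match n with 0 | 1 => true | _ => false end.
Definition tb (n : nat) := match n with 0 | 2 => true | _ => false end.
Definition bbtab (m n : nat) : option nat :=
  if m < 4 then (if n < 4 then None else if m == n - 4 then Some m else None)
  else if n < 4 then (if 3 - (m - 4) == n then Some n else None)
  else if m == n then Some m else None.
Definition tab3 p n q := obind (fun r => bbtab r q) (bbtab p n).
Definition projL n := if n < 4 then 4 + (3 - n) else n.
Definition projR n := if n < 4 then 4 + n else n.
Definition pb (i : bool) := if i then fb else fid.
Definition pc (i : bool) := if i then fc else fid.
Definition pz (i : bool) := if i then fz else fid.
Definition hmf (n : nat) := fmul (fmul (pb (bitb n)) (pc (bitc n))) (pz (bitz n)).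
Definition uf (s : bool) := if s then fadd fid fb else fadd fid (fopp fb).
Definition vf (s : bool) := if s then fadd fid fc else fadd fid (fopp fc).
Definition uvf s t := fmul (uf s) (vf t).
Definition bf (m : nat) := if m < 4 then fmul fz (uvf (sb m) (tb m))
  else uvf (sb (m - 4)) (tb (m - 4)).
Definition dtab (n m : nat) : int :=
  nth 0%R (nth [::] [:: [:: 0; 0; 0; 0; 1; 1; 1; 1];
                      [:: 0; 0; 0; 0; 1; 1; -1; -1];
                      [:: 0; 0; 0; 0; 1; -1; 1; -1];
                      [:: 0; 0; 0; 0; 1; -1; -1; 1];
                      [:: 1; 1; 1; 1; 0; 0; 0; 0];
                      [:: -1; -1; 1; 1; 0; 0; 0; 0];
                      [:: -1; 1; -1; 1; 0; 0; 0; 0];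
                      [:: 1; -1; -1; 1; 0; 0; 0; 0]]%R n) m.

Definition okp (S : nat -> bool) (o : option nat) := if o is Some p then S p else true.
Definition tabok (S : nat -> bool) := all (fun m => all (fun n =>
  (S n || S m) ==> okp S (bbtab m n)) (iota 0 8)) (iota 0 8).
Definition clf (T : nat -> bool) n :=
  T n || (n < 4) && (T (4 + n) || T (4 + (3 - n))).
Definition clm (T : seq bool) : seq bool := mkseq (clf (nth false T)) 8.
Definition closedm (S : nat -> bool) :=
  all (fun i => S (4 + i) ==> S i && S (3 - i)) (iota 0 4).
Fixpoint masks n : seq (seq bool) :=
  if n is n'.+1 then [seq b :: s | b <- [:: true; false], s <- masks n'] else [:: [::]].
Definition gensT : seq (seq bool) := [::
  [:: false; false; false; false; false; false; false; false];
  [:: false; false; false; false; true; true; true; true];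
  [:: false; false; false; false; true; false; false; false];
  [:: false; false; false; false; false; true; false; false];
  [:: false; false; false; false; false; false; true; false];
  [:: false; false; false; false; false; false; false; true];
  [:: false; false; false; false; true; true; false; false];
  [:: false; false; false; false; true; false; true; false];
  [:: false; false; false; false; true; false; false; true];
  [:: false; false; false; false; false; true; true; false];
  [:: false; false; false; false; false; true; false; true];
  [:: false; false; false; false; false; false; true; true];
  [:: false; false; false; false; true; true; true; false];
  [:: false; false; false; false; true; true; false; true];
  [:: false; false; false; false; true; false; true; true];
  [:: false; false; false; false; false; true; true; true];
  [:: true; true; true; true; false; false; false; false];
  [:: true; false; false; false; false; false; false; false];
  [:: false; true; false; false; false; false; false; false];
  [:: false; false; true; false; false; false; false; false];
  [:: false; false; false; true; false; false; false; false];
  [:: true; true; false; false; false; false; false; false];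
  [:: true; false; true; false; false; false; false; false];
  [:: true; false; false; true; false; false; false; false];
  [:: false; true; true; false; false; false; false; false];
  [:: false; true; false; true; false; false; false; false];
  [:: false; false; true; true; false; false; false; false];
  [:: true; true; true; false; false; false; false; false];
  [:: true; true; false; true; false; false; false; false];
  [:: true; false; true; true; false; false; false; false];
  [:: false; true; true; true; false; false; false; false];
  [:: true; true; true; true; true; false; false; false];
  [:: false; true; false; false; true; false; false; false];
  [:: false; false; true; false; true; false; false; false];
  [:: true; true; true; true; false; true; false; false];
  [:: true; false; false; false; false; true; false; false];
  [:: false; false; false; true; false; true; false; false];
  [:: true; true; true; true; false; false; true; false];
  [:: true; false; false; false; false; false; true; false];
  [:: false; false; false; true; false; false; true; false];
  [:: true; true; true; true; false; false; false; true];
  [:: false; true; false; false; false; false; false; true];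
  [:: false; false; true; false; false; false; false; true];
  [:: true; true; true; true; true; false; false; true];
  [:: false; true; false; false; true; false; false; true];
  [:: false; false; true; false; true; false; false; true];
  [:: true; true; true; true; false; true; true; false];
  [:: true; false; false; false; false; true; true; false];
  [:: false; false; false; true; false; true; true; false]].

Lemma C1 : all (fun m => closedm (nth false m) ==> (m \in map clm gensT)) (masks 8).
Proof. by vm_compute. Qed.
Lemma C2 : uniq (map clm gensT).
Proof. by vm_compute. Qed.
Lemma C3 : all (fun T => tabok (nth false (clm T))) gensT.
Proof. by vm_compute. Qed.
Lemma C4 : tabok xpredT.
Proof. by vm_compute. Qed.
Lemma mem_masks n s : size s = n -> s \in masks n.
Proof.
elim: n s => [|n IH] [|b s] // Hs.
change (b :: s \in [seq b :: s | b <- [:: true; false], s <- masks n]).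
apply: (allpairs_f (fun b s => b :: s)); first by case: (b).
by apply: IH; case: Hs.
Qed.

Local Open Scope ring_scope.
Lemma allP8 (P : nat -> bool) : all P (iota 0 8) -> forall m, (m < 8)%N -> P m.
Proof. by move/allP=> H m Hm; apply: H; rewrite mem_iota. Qed.

Lemma bbtab_lt m n p : (m < 8)%N -> (n < 8)%N -> bbtab m n = Some p -> (p < 8)%N.
Proof.
move=> Hm Hn; have := @allP8 (fun m => all (fun n =>
  if bbtab m n is Some p then (p < 8)%N else true) (iota 0 8)) (erefl _) _ Hm.
move=> /allP /(_ n); rewrite mem_iota Hn => /(_ isT).
by case: (bbtab m n) => // q H [<-].
Qed.

Section Alg.
Variable k : fieldType.
Hypothesis h4 : (4%:R : k) != 0.
Local Notation Hb := (Hb k). Local Notation Hc := (Hc k). Local Notation Hz := (Hz k).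
Local Notation IM := (@IM k).

Lemma Hbb : Hb * Hb = 1. Proof. imcheck. Qed.
Lemma Hcc : Hc * Hc = 1. Proof. imcheck. Qed.
Lemma Hzz : Hz * Hz = 0. Proof. imcheck. Qed.

Definition U (s : bool) := if s then 1 + Hb else 1 - Hb.
Definition V (t : bool) := if t then 1 + Hc else 1 - Hc.
Definition es s t : 'M[k]_8 := 4%:R^-1 *: (U s * V t).

Lemma sMM a b (X Y : 'M[k]_8) : (a *: X) * (b *: Y) = (a * b) *: (X * Y).
Proof. by rewrite -scalerAl -scalerAr scalerA. Qed.

Lemma UVUV s t s' t' : U s * V t * (U s' * V t') =
  if (s == s') && (t == t') then (U s * V t) *+ 4 else 0.
Proof.
case: s; case: t; case: s'; case: t'; rewrite /U /V /=; imcheck.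
Qed.

Lemma es_mul s t s' t' : es s t * es s' t' =
  if (s == s') && (t == t') then es s t else 0.
Proof.
rewrite /es sMM UVUV; case: ifP => _; last by rewrite scaler0.
rewrite -scaler_nat scalerA; congr (_ *: _).
by rewrite -mulrA mulVf // mulr1.
Qed.

Lemma z_es s t : Hz * es s t = es (~~ s) (~~ t) * Hz.
Proof.
rewrite /es -scalerAl -scalerAr; congr (_ *: _).
case: s; case: t; rewrite /U /V /=; imcheck.
Qed.

Lemma sum_es : es true true + es true false + es false true + es false false = 1.
Proof.
rewrite /es -!scalerDr.
have -> : U true * V true + U true * V false + U false * V true + U false * V false
   = 1 *+ 4 by rewrite /U /V; imcheck.
by rewrite -scaler_nat scalerA mulVf // scale1r.
Qed.

Lemma b_es s t : Hb * es s t = if s then es s t else - es s t.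
Proof.
rewrite /es -scalerAr; case: s; rewrite -?scalerN; congr (_ *: _);
case: t; rewrite /U /V /=; imcheck.
Qed.

Lemma c_es s t : Hc * es s t = if t then es s t else - es s t.
Proof.
rewrite /es -scalerAr; case: t; rewrite -?scalerN; congr (_ *: _);
case: s; rewrite /U /V /=; imcheck.
Qed.


Definition E (n : nat) : 'M[k]_8 :=
  match n with 0 => e0 k | 1 => e1 k | 2 => e2 k | _ => e3 k end.

Lemma E_es n : E n = es (sb n) (tb n).
Proof. by case: n => [|[|[|n]]]. Qed.

Lemma EE i j : (i < 4)%N -> (j < 4)%N -> E i * E j = (if i == j then E i else 0).
Proof. rewrite !E_es es_mul. by case: i => [|[|[|[|i]]]] // _; case: j => [|[|[|[|j]]]]. Qed.

Lemma zE j : (j < 4)%N -> Hz * E j = E (3 - j)%N * Hz.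
Proof. rewrite !E_es z_es. by case: j => [|[|[|[|j]]]]. Qed.

Lemma Ez i : (i < 4)%N -> E i * Hz = Hz * E (3 - i)%N.
Proof. by move=> Hi; rewrite zE ?subKn //; lia. Qed.

Definition B n := if (n < 4)%N then Hz * E n else E (n - 4)%N.
Definition bbv o := match o with Some p => B p | None => 0 end.

Lemma BB m n : (m < 8)%N -> (n < 8)%N -> B m * B n = bbv (bbtab m n).
Proof.
move=> Hm Hn; rewrite /B /bbtab.
case: (ltnP m 4) => m4; case: (ltnP n 4) => n4 /=.
- by rewrite mulrA -(mulrA Hz) Ez // mulrA Hzz !mul0r.
- rewrite -mulrA EE //; last by lia.
  by case: ifP => _; rewrite /bbv /B ?m4 ?mulr0.
- rewrite mulrA Ez; last by lia.
  rewrite -mulrA EE //; last by lia.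
  by case: ifP => [/eqP ->|_]; rewrite /bbv /B ?n4 ?mulr0.
- rewrite EE; [|lia|lia].
  have -> : ((m - 4)%N == (n - 4)%N) = (m == n) by apply/eqP/eqP; lia.
  by case: ifP => _; rewrite /bbv /B // ltnNge m4.
Qed.

Lemma BBB p n q : (p < 8)%N -> (n < 8)%N -> (q < 8)%N ->
  B p * B n * B q = bbv (tab3 p n q).
Proof.
move=> Hp Hn Hq; rewrite BB // /tab3.
case E: (bbtab p n) => [r|] /=; last by rewrite mul0r.
by have Hr := bbtab_lt _ _ _ Hp Hn E; rewrite BB.
Qed.

Arguments B : simpl never.

Lemma proj (a : nat -> k) n : (n < 8)%N ->
  B (projL n) * (\sum_(m < 8) a m *: B m) * B (projR n) = a n *: B n.
Proof.
move=> Hn.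
have HL : (projL n < 8)%N by rewrite /projL; case: (ltnP n 4) => H; lia.
have HR : (projR n < 8)%N by rewrite /projR; case: (ltnP n 4) => H; lia.
rewrite mulr_sumr mulr_suml.
rewrite (eq_bigr (fun m : 'I_8 => a m *: bbv (tab3 (projL n) m (projR n)))); last first.
  by move=> m _; rewrite -scalerAr -scalerAl BBB.
rewrite !big_ord_recl big_ord0.
by case: n Hn {HL HR} => [|[|[|[|[|[|[|[|n]]]]]]]] //= _;
  rewrite ?scaler0 ?addr0 ?add0r.
Qed.

Lemma B_IM m : B m = 4%:R^-1 *: IM (bf m).
Proof.
rewrite /B /bf; case: ifP => _; rewrite E_es /es -?scalerAr; congr (_ *: _);
  case: (sb _); case: (tb _); rewrite /U /V /uvf /uf /vf /=; imcheck.
Qed.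

Lemma B_neq0 m : (m < 8)%N -> B m != 0.
Proof.
move=> Hm.
have Hbf : bf m (if (m < 4)%N then 4%N else 0%N) 0%N = 1.
  by apply/eqP; move: m Hm; apply: allP8; vm_compute.
rewrite B_IM; apply/negP => /eqP H.
pose r0 : 'I_8 := inord (if (m < 4)%N then 4%N else 0%N).
have := congr1 (fun X : 'M[k]_8 => (4%:R *: X) r0 (inord 0)) H.
rewrite /= scalerA mulfV // scale1r scaler0 !mxE !inordK; last 2 first.
- by case: ifP.
- by [].
by rewrite Hbf => /eqP; rewrite oner_eq0.
Qed.

Lemma Hmono_IM (n : 'I_8) : Hmono k n = IM (hmf n).
Proof.
rewrite /Hmono /hmf; case: (bitb n); case: (bitc n); case: (bitz n);
  rewrite /= ?expr0 ?expr1 ?HbE ?HcE ?HzE ?IM1 !IM_mul //.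
Qed.

Lemma IM_lin (c : nat -> int) (g : nat -> nat -> nat -> int) :
  \sum_(n < 8) (c n)%:~R *: IM (g n) = IM (fun i j => sum8 (fun n => c n * g n i j)).
Proof.
apply/matrixP => i j; rewrite summxE mxE sum8E rmorph_sum.
by apply: eq_bigr => n _; rewrite !mxE rmorphM.
Qed.

Lemma inH0 : inH (0 : 'M[k]_8).
Proof. by exists (fun _ => 0); rewrite big1 // => n _; rewrite scale0r. Qed.

Lemma inHD (x y : 'M[k]_8) : inH x -> inH y -> inH (x + y).
Proof.
move=> [l1 ->] [l2 ->]; exists (fun n => l1 n + l2 n).
by rewrite -big_split; apply: eq_bigr => n _; rewrite scalerDl.
Qed.

Lemma inHZ c (x : 'M[k]_8) : inH x -> inH (c *: x).
Proof.
move=> [l ->]; exists (fun n => c * l n).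
by rewrite scaler_sumr; apply: eq_bigr => n _; rewrite scalerA.
Qed.

Lemma inH_sum (F : 'I_8 -> 'M[k]_8) : (forall n, inH (F n)) -> inH (\sum_(n < 8) F n).
Proof. by move=> H; apply: big_ind => //; [exact: inH0 | exact: inHD]. Qed.

Lemma inH_IM (f : nat -> nat -> int) : feq f (fun i j => sum8 (fun n => f n 0%N * hmf n i j)) -> inH (IM f).
Proof.
move=> H; exists (fun n : 'I_8 => (f n 0%N)%:~R).
rewrite (IM_eq _ _ _ H) -IM_lin; apply: eq_bigr => n _; by rewrite Hmono_IM.
Qed.

Lemma inH_B m : (m < 8)%N -> inH (B m).
Proof.
move=> Hm; rewrite B_IM; apply: inHZ; apply: inH_IM.
by move: m Hm; apply: allP8; vm_compute.
Qed.

Lemma inH_Hmono n : inH (Hmono k n).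
Proof.
exists (fun m => if m == n then 1 else 0).
rewrite (bigD1 n) //= eqxx scale1r big1 ?addr0 // => i /negbTE ->.
by rewrite scale0r.
Qed.

Lemma inH1 : inH (1 : 'M[k]_8).
Proof.
have -> : (1 : 'M[k]_8) = Hmono k ord0 by rewrite /Hmono /= !expr0 !mulr1.
exact: inH_Hmono.
Qed.

Lemma inHz : inH Hz.
Proof.
have -> : Hz = Hmono k (inord 4) by rewrite /Hmono inordK //= !expr0 expr1 !mul1r.
exact: inH_Hmono.
Qed.

Definition J (S : nat -> bool) (x : 'M[k]_8) := exists a : nat -> k,
  x = \sum_(n < 8) a n *: B n /\ forall n, (n < 8)%N -> ~~ S n -> a n = 0.

Lemma J_inH (S : nat -> bool) (x : 'M[k]_8) : J S x -> inH x.
Proof.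
move=> [a [-> _]]; apply: inH_sum => n; apply: inHZ; exact: inH_B.
Qed.

Lemma Hmono_J n : J xpredT (Hmono k n).
Proof.
exists (fun m => (dtab n m)%:~R); split => //.
rewrite Hmono_IM.
rewrite (eq_bigr (fun m : 'I_8 => 4%:R^-1 *: ((dtab n m)%:~R *: IM (bf m)))); last first.
  by move=> m _; rewrite B_IM scalerA mulrC -scalerA.
rewrite -scaler_sumr IM_lin.
have -> : IM (fun i j => sum8 (fun m => dtab n m * bf m i j)) = (4%:~R) *: IM (hmf n).
  rewrite IM_scal; apply: IM_eq; move: (nat_of_ord n) (ltn_ord n); apply: allP8.
  by vm_compute.
by rewrite scalerA mulVf // scale1r.
Qed.

Lemma inH_J (x : 'M[k]_8) : inH x -> J xpredT x.
Proof.
move=> [l ->].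
have JD : forall x y, J xpredT x -> J xpredT y -> J xpredT (x + y).
  move=> x1 y1 [a1 [-> _]] [a2 [-> _]]; exists (fun n => a1 n + a2 n); split => //.
  by rewrite -big_split; apply: eq_bigr => n _; rewrite scalerDl.
apply: (big_ind (J xpredT)) => //.
  by exists (fun _ => 0); split => //; rewrite big1 // => n _; rewrite scale0r.
move=> n _; have [a [-> _]] := Hmono_J n; exists (fun m => l n * a m); split => //.
by rewrite scaler_sumr; apply: eq_bigr => m _; rewrite scalerA.
Qed.

Lemma J0 (S : nat -> bool) : J S 0.
Proof. by exists (fun _ => 0); split => //; rewrite big1 // => n _; rewrite scale0r. Qed.

Lemma JD (S : nat -> bool) (x y : 'M[k]_8) : J S x -> J S y -> J S (x + y).
Proof.
move=> [a1 [-> H1]] [a2 [-> H2]]; exists (fun n => a1 n + a2 n); split.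
  by rewrite -big_split; apply: eq_bigr => n _; rewrite scalerDl.
by move=> n Hn HS; rewrite H1 // H2 // addr0.
Qed.

Lemma JZ (S : nat -> bool) c (x : 'M[k]_8) : J S x -> J S (c *: x).
Proof.
move=> [a [-> H]]; exists (fun n => c * a n); split.
  by rewrite scaler_sumr; apply: eq_bigr => n _; rewrite scalerA.
by move=> n Hn HS; rewrite H // mulr0.
Qed.

Lemma Jsum (S : nat -> bool) (F : 'I_8 -> 'M[k]_8) : (forall n, J S (F n)) -> J S (\sum_(n < 8) F n).
Proof. by move=> H; apply: big_ind => //; [exact: J0 | exact: JD]. Qed.

Lemma Bsum n : (n < 8)%N -> B n = \sum_(m < 8) (if m == n :> nat then 1 else 0) *: B m.
Proof.
move=> Hn; rewrite (bigD1 (Ordinal Hn)) //= eqxx scale1r big1 ?addr0 // => i.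
by move=> /negbTE; rewrite -val_eqE /= => ->; rewrite scale0r.
Qed.

Lemma JB (S : nat -> bool) n : (n < 8)%N -> S n -> J S (B n).
Proof.
move=> Hn HS; exists (fun m => if m == n then 1 else 0); split; first exact: Bsum.
by move=> m Hm; case: eqP => // ->; rewrite HS.
Qed.

Lemma J_bbv (S : nat -> bool) m n : (m < 8)%N -> (n < 8)%N -> okp S (bbtab m n) -> J S (bbv (bbtab m n)).
Proof.
move=> Hm Hn; case E: (bbtab m n) => [p|] /= H; last exact: J0.
by apply: JB => //; exact: bbtab_lt E.
Qed.

Lemma J_ideal (S : nat -> bool) : tabok S -> is_ideal (J S).
Proof.
move=> T; split; [exact: J_inH | exact: J0 | exact: JD |].
have TT : forall m n, (m < 8)%N -> (n < 8)%N -> S n || S m -> okp S (bbtab m n).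
  move=> m n Hm Hn; move: m Hm (allP8 _ T).
  move=> m Hm /(_ m Hm) /allP /(_ n); rewrite mem_iota Hn => /(_ isT) /implyP; exact.
move=> h x /inH_J [b [-> _]] [a [-> Ha]]; split.
- rewrite mulr_sumr; apply: Jsum => n.
  case HSn: (S n); last by rewrite Ha ?ltn_ord ?HSn // scale0r mulr0; exact: J0.
  rewrite -scalerAr; apply: JZ; rewrite mulr_suml; apply: Jsum => m.
  rewrite -scalerAl; apply: JZ; rewrite BB //; apply: J_bbv => //.
  by apply: TT; rewrite ?HSn.
- rewrite mulr_suml; apply: Jsum => n.
  case HSn: (S n); last by rewrite Ha ?ltn_ord ?HSn // scale0r mul0r; exact: J0.
  rewrite -scalerAl; apply: JZ; rewrite mulr_sumr; apply: Jsum => m.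
  rewrite -scalerAr; apply: JZ; rewrite BB //; apply: J_bbv => //.
  by apply: TT; rewrite ?HSn ?orbT.
Qed.

Lemma idealZ (I : 'M[k]_8 -> Prop) c x : is_ideal I -> I x -> I (c *: x).
Proof.
move=> [_ _ _ HM] Ix.
have -> : c *: x = (c *: 1) * x by rewrite -scalerAl mul1r.
by case: (HM (c *: 1) x (inHZ c _ inH1) Ix).
Qed.

Lemma charI (I : 'M[k]_8 -> Prop) (S : nat -> bool) : is_ideal I ->
  (forall n, (n < 8)%N -> S n <-> I (B n)) -> forall x, I x <-> J S x.
Proof.
move=> HI HS x; have [Hin I0 ID HM] := HI; split.
- move=> Ix; have [a [Ex _]] := inH_J _ (Hin x Ix); exists a; split => // n Hn HSn.
  apply/eqP; apply/negP => /negP Han; move/negP: HSn; apply; apply/(HS n Hn).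
  have : I (B (projL n) * x * B (projR n)).
    have HL : (projL n < 8)%N by rewrite /projL; case: (ltnP n 4) => H; lia.
    have HR : (projR n < 8)%N by rewrite /projR; case: (ltnP n 4) => H; lia.
    have [+ _] := HM _ x (inH_B _ HL) Ix => /(HM _ _ (inH_B _ HR)) [_]; exact.
  rewrite Ex proj // => /(@idealZ _ (a n)^-1 _ HI).
  by rewrite scalerA mulVf // scale1r.
- move=> [a [-> Ha]]; apply: big_ind => //.
  move=> n _; case HSn: (S n).
    by apply: idealZ => //; apply/(HS n (ltn_ord n)).
  by rewrite Ha ?HSn // scale0r.
Qed.

Lemma inH_ideal : is_ideal (@inH k).
Proof.
have [_ _ _ HM] := J_ideal _ C4.
split => //; [exact: inH0 | exact: inHD |].
move=> h x Hh Hx; have [H1 H2] := HM h x Hh (inH_J _ Hx); split; [exact: J_inH H1 | exact: J_inH H2].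
Qed.

Lemma gen_ideal_ideal (g : 'M[k]_8) : inH g -> is_ideal (gen_ideal g).
Proof.
move=> Hg; split.
- by move=> x /(_ _ inH_ideal Hg).
- by move=> I [].
- by move=> x y Hx Hy I HI Ig; have [_ _ ID _] := HI; apply: ID; [apply: Hx | apply: Hy].
- move=> h x Hh Hx; split=> I HI Ig; have [_ _ _ HM] := HI;
    by have [] := HM h x Hh (Hx I HI Ig).
Qed.

Definition gsum (T : seq bool) : 'M[k]_8 :=
  \sum_(n < 8) (if nth false T n then 1 else 0) *: B n.

Lemma BF j : (j < 4)%N -> B j = Hz * E j.
Proof. by move=> Hj; rewrite /B Hj. Qed.

Lemma BE i : B (4 + i) = E i.
Proof. by rewrite /B ltnNge leq_addr /= addKn. Qed.

Lemma gen_B T n : (n < 8)%N -> tabok (nth false (clm T)) ->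
  gen_ideal (gsum T) (B n) <-> nth false (clm T) n.
Proof.
move=> Hn Tok; split.
- move=> Hg; apply/negP => HS.
  have [a [Ea Ha]] : J (nth false (clm T)) (B n).
    apply: Hg; first exact: J_ideal.
    exists (fun m => if nth false T m then 1 else 0); split => // m Hm.
    rewrite /clm nth_mkseq // /clf; by case: (nth false T m).
  have := proj (fun m => if m == n then 1 else 0) _ Hn.
  rewrite -Bsum // {1}Ea proj // (Ha n Hn (introN idP HS)) scale0r eqxx scale1r.
  by move=> /esym/eqP; rewrite (negbTE (B_neq0 _ Hn)).
- rewrite /clm nth_mkseq // /clf => Hc I HI Ig.
  have [_ _ _ HM] := HI.
  have HT : forall m, (m < 8)%N -> nth false T m -> I (B m).
    move=> m Hm HTm.
    have HL : (projL m < 8)%N by rewrite /projL; case: (ltnP m 4) => H; lia.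
    have HR : (projR m < 8)%N by rewrite /projR; case: (ltnP m 4) => H; lia.
    have := proj (fun m => if nth false T m then 1 else 0) _ Hm; rewrite HTm scale1r => <-.
    have [+ _] := HM _ _ (inH_B _ HL) Ig => /(HM _ _ (inH_B _ HR)) [_]; exact.
  case/orP: Hc => [H|/andP [n4 /orP [H|H]]].
  + exact: HT n Hn H.
  + have H48 : (4 + n < 8)%N by lia.
    rewrite BF //; have /(HM Hz _ inHz) [+ _] := HT _ H48 H; rewrite BE; exact.
  + have H48 : (4 + (3 - n) < 8)%N by lia.
    rewrite BF // zE //; have /(HM Hz _ inHz) [_ +] := HT _ H48 H; rewrite BE; exact.
Qed.

Lemma sum_e : e0 k + e1 k + e2 k + e3 k = 1.
Proof. exact: sum_es. Qed.

Lemma cons_eq (x y : 'M[k]_8) s t : x = y -> s = t -> x :: s = y :: t.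
Proof. by move=> -> ->. Qed.

Lemma A1 : gens49 k = map gsum gensT.
Proof.
rewrite /gensT /=.
repeat (apply: cons_eq; last first); first by [].
all: rewrite /gsum !big_ord_recl big_ord0 /= ?scale1r ?scale0r ?addr0 ?add0r /B /=.
all: rewrite ?addrA -?mulrDr ?sum_e ?mulr1 //.
Qed.

Lemma gsum_inH T : inH (gsum T).
Proof.
apply: (@J_inH xpredT); exists (fun m => if nth false T m then 1 else 0); split => //.
Qed.

Lemma main_field :
  size (gens49 k) = 49%N /\
  (forall I : 'M[k]_8 -> Prop, is_ideal I ->
     exists2 g, g \in gens49 k & same_ideal I (gen_ideal g)) /\
  (forall i j : nat, (i < 49)%N -> (j < 49)%N ->
     same_ideal (gen_ideal (nth 0 (gens49 k) i)) (gen_ideal (nth 0 (gens49 k) j)) ->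
     i = j).
Proof.
split; first by [].
split.
- move=> I HI; have [_ _ _ HM] := HI.
  pose S := fun n => if excluded_middle_informative (I (B n)) then true else false.
  have SI : forall n, S n <-> I (B n).
    by move=> n; rewrite /S; case: (excluded_middle_informative _) => H; split.
  pose mI := mkseq S 8.
  have HmI : forall n, (n < 8)%N -> nth false mI n = S n.
    by move=> n Hn; rewrite nth_mkseq.
  have Hcl : closedm (nth false mI).
    apply/allP => i; rewrite mem_iota => /andP [_ Hi].
    rewrite !HmI; [|lia|lia|lia]; apply/implyP => /SI H.
    rewrite BE in H; apply/andP; split; apply/SI.
    + rewrite BF //; have [+ _] := HM _ _ inHz H; exact.
    + rewrite BF; last by lia.
      rewrite -Ez //; have [_ +] := HM _ _ inHz H; exact.
  have /mapP [T HT EmT] : mI \in map clm gensT.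
    have := allP C1 mI (mem_masks _ _ (size_mkseq _ _)); rewrite Hcl; exact.
  have Tok : tabok (nth false (clm T)) := allP C3 T HT.
  exists (gsum T); first by rewrite A1; apply: map_f.
  have HmIS : forall n, (n < 8)%N -> nth false mI n <-> I (B n).
    by move=> n Hn; rewrite HmI.
  have HgS : forall n, (n < 8)%N -> nth false (clm T) n <-> gen_ideal (gsum T) (B n).
    by move=> n Hn; split => /(gen_B T n Hn Tok).
  move=> x; split => Hx.
  + apply/(charI _ _ (gen_ideal_ideal _ (gsum_inH T)) HgS); rewrite -EmT.
    by apply/(charI _ _ HI HmIS).
  + apply/(charI _ _ HI HmIS); rewrite EmT.
    by apply/(charI _ _ (gen_ideal_ideal _ (gsum_inH T)) HgS).
- move=> i j Hi Hj Hsame.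
  have sz : size gensT = 49%N by [].
  move: Hsame; rewrite A1 !(nth_map [::]) ?sz // => Hsame.
  have Tiok : tabok (nth false (clm (nth [::] gensT i))) by apply: (allP C3); rewrite mem_nth ?sz.
  have Tjok : tabok (nth false (clm (nth [::] gensT j))) by apply: (allP C3); rewrite mem_nth ?sz.
  have Eq : clm (nth [::] gensT i) = clm (nth [::] gensT j).
    apply: (@eq_from_nth _ false); first by rewrite !size_mkseq.
    move=> n; rewrite size_mkseq => Hn.
    have H1 := gen_B (nth [::] gensT i) n Hn Tiok.
    have H2 := gen_B (nth [::] gensT j) n Hn Tjok.
    have H3 := Hsame (B n).
    apply/idP/idP => Ha.
    * by apply/H2; apply/H3; apply/H1.
    * by apply/H1; apply/H3; apply/H2.
  have : nth [::] (map clm gensT) i == nth [::] (map clm gensT) j.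
    by rewrite !(nth_map [::]) ?sz // Eq.
  by rewrite nth_uniq ?size_map ?sz ?C2 // => /eqP.
Qed.

End Alg.

Theorem theorem5p8 (k : closedFieldType) (char0 : [pchar k] =i pred0) :
  size (gens49 k) = 49%N /\
  (forall I : 'M[k]_8 -> Prop, is_ideal I ->
     exists2 g, g \in gens49 k & same_ideal I (gen_ideal g)) /\
  (forall i j : nat, (i < 49)%N -> (j < 49)%N ->
     same_ideal (gen_ideal (nth 0 (gens49 k) i)) (gen_ideal (nth 0 (gens49 k) j)) ->
     i = j).
Proof.
have h4 : (4%:R : k) != 0 by rewrite ((pcharf0P k).1 char0).
exact: (@main_field k h4).
Qed.
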